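(* Let $(\mathcal A,\mathcal B)$ be a cotorsion pair in $\mathrm{Mod}\text{-}R$ such that $B^{(\omega)}\in\mathcal B$ for every $B\in\mathcal B$. Let $h:A\to M$ be an $\mathcal A$-cover. Then $h$ is an isomorphism if and only if the inclusion $\mathrm{Ker}(h)\subseteq A$ is locally split and $M^{(\omega)}$ has an $\mathcal A$-cover.
   Context: All modules are right $R$-modules over a ring $R$; a cotorsion pair is $(\mathcal A,\mathcal B)$ with $\mathcal A={}^{\perp}\mathcal B$, $\mathcal B=\mathcal A^{\perp}$ (w.r.t. $\mathrm{Ext}^1_R$). An inclusion $K\subseteq A$ is locally split if for every $x\in K$ there is a homomorphism $g:A\to K$ with $g(x)=x$. Covers are in the sense of Enochs. *)

(* Defs.v *)
From HB Require Import structures.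
From mathcomp Require Import all_boot all_algebra.
From mathcomp Require Import boolp.
Set Implicit Arguments. Unset Strict Implicit. Unset Printing Implicit Defensive.
Import GRing.Theory.
Local Open Scope ring_scope.

(* Right R-modules are modelled as left modules over the converse ring R^c:
   rmodType R := lmodType R^c. *)
Notation rmodType R := (lmodType (R^c)).

Section DirectSum.
Variables (S : pzRingType) (M : lmodType S).

Definition fin_supp (f : nat -> M) := exists N : nat, forall n, (N <= n)%N -> f n = 0.

Record dsum_omega := DSumOmega { dsum_fun :> nat -> M; dsum_finP : fin_supp dsum_fun }.

HB.instance Definition _ := gen_eqMixin dsum_omega.
HB.instance Definition _ := gen_choiceMixin dsum_omega.

Lemma dsum_eq (u v : dsum_omega) : (forall n, u n = v n) -> u = v.
Proof.
case: u v => [f fP] [g gP] /= fg.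
have efg : f = g by apply: funext.
subst g; congr DSumOmega; exact: Prop_irrelevance.
Qed.

Lemma fin_supp0 : fin_supp (fun _ => 0).
Proof. by exists 0%N. Qed.

Lemma fin_suppD (u v : dsum_omega) : fin_supp (fun n => u n + v n).
Proof.
case: (dsum_finP u) => N HN; case: (dsum_finP v) => K HK.
exists (maxn N K) => n hn.
rewrite HN ?HK ?addr0 //; apply: leq_trans hn; by rewrite ?leq_maxl ?leq_maxr.
Qed.

Lemma fin_suppN (u : dsum_omega) : fin_supp (fun n => - u n).
Proof. case: (dsum_finP u) => N HN; exists N => n hn; by rewrite HN ?oppr0. Qed.

Lemma fin_suppZ (a : S) (u : dsum_omega) : fin_supp (fun n => a *: u n).
Proof. case: (dsum_finP u) => N HN; exists N => n hn; by rewrite HN ?scaler0. Qed.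

Definition dsum_zero := DSumOmega fin_supp0.
Definition dsum_add u v := DSumOmega (fin_suppD u v).
Definition dsum_opp u := DSumOmega (fin_suppN u).
Definition dsum_scale a u := DSumOmega (fin_suppZ a u).

Lemma dsum_addA : associative dsum_add.
Proof. by move=> u v w; apply: dsum_eq => n /=; rewrite addrA. Qed.
Lemma dsum_addC : commutative dsum_add.
Proof. by move=> u v; apply: dsum_eq => n /=; rewrite addrC. Qed.
Lemma dsum_add0 : left_id dsum_zero dsum_add.
Proof. by move=> u; apply: dsum_eq => n /=; rewrite add0r. Qed.
Lemma dsum_addN : left_inverse dsum_zero dsum_opp dsum_add.
Proof. by move=> u; apply: dsum_eq => n /=; rewrite addNr. Qed.

HB.instance Definition _ :=
  GRing.isZmodule.Build dsum_omega dsum_addA dsum_addC dsum_add0 dsum_addN.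

Lemma dsum_scaleA a b v : dsum_scale a (dsum_scale b v) = dsum_scale (a * b) v.
Proof. by apply: dsum_eq => n /=; rewrite scalerA. Qed.
Lemma dsum_scale1 : left_id 1 dsum_scale.
Proof. by move=> v; apply: dsum_eq => n /=; rewrite scale1r. Qed.
Lemma dsum_scaleDr : right_distributive dsum_scale +%R.
Proof. by move=> a u v; apply: dsum_eq => n /=; rewrite scalerDr. Qed.
Lemma dsum_scaleDl v : {morph dsum_scale^~ v : a b / a + b}.
Proof. by move=> a b; apply: dsum_eq => n /=; rewrite scalerDl. Qed.

HB.instance Definition _ := GRing.Zmodule_isLmodule.Build S dsum_omega
  dsum_scaleA dsum_scale1 dsum_scaleDr dsum_scaleDl.

End DirectSum.

Notation "M ^(omega)" := (dsum_omega M) (at level 2, format "M ^(omega)").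

Section ModuleNotions.
Variable (S : pzRingType).

(* Ext^1_S(A, B) = 0 in the Yoneda sense: every extension
   0 -> B --i--> X --p--> A -> 0 splits. *)
Definition Ext1_zero (A B : lmodType S) : Prop :=
  forall (X : lmodType S) (i : {linear B -> X}) (p : {linear X -> A}),
    injective i -> (forall a : A, exists x : X, p x = a) ->
    (forall x : X, p x = 0 <-> exists b : B, x = i b) ->
    exists s : {linear A -> X}, forall a : A, p (s a) = a.

Definition cotorsion_pair (CA CB : lmodType S -> Prop) : Prop :=
  (forall A : lmodType S, CA A <-> (forall B : lmodType S, CB B -> Ext1_zero A B)) /\
  (forall B : lmodType S, CB B <-> (forall A : lmodType S, CA A -> Ext1_zero A B)).

Definition is_precover (CA : lmodType S -> Prop) (A M : lmodType S)
  (h : {linear A -> M}) : Prop :=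
  CA A /\
  forall (A' : lmodType S) (f : {linear A' -> M}), CA A' ->
    exists g : {linear A' -> A}, forall x : A', h (g x) = f x.

Definition is_cover (CA : lmodType S -> Prop) (A M : lmodType S)
  (h : {linear A -> M}) : Prop :=
  is_precover CA h /\
  forall g : {linear A -> A}, (forall x : A, h (g x) = h x) -> bijective g.

Definition has_cover (CA : lmodType S -> Prop) (M : lmodType S) : Prop :=
  exists (A : lmodType S) (h : {linear A -> M}), is_cover CA h.

(* The inclusion K = Ker h ⊆ A is locally split: for every x in K there is
   g : A -> K with g x = x (g viewed as a map into A with image in K). *)
Definition kernel_locally_split (A M : lmodType S) (h : {linear A -> M}) : Prop :=
  forall x : A, h x = 0 ->
    exists g : {linear A -> A}, (forall y : A, h (g y) = 0) /\ g x = x.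

Definition is_iso (A M : lmodType S) (h : {linear A -> M}) : Prop := bijective h.

End ModuleNotions.

(* Main.v *)
Require Import Defs.
From HB Require Import structures.
From mathcomp Require Import all_boot all_algebra.
From mathcomp Require Import boolp.
Set Implicit Arguments. Unset Strict Implicit. Unset Printing Implicit Defensive.
Import GRing.Theory.
Local Open Scope ring_scope.


Section Gen.
Variable S : pzRingType.

Definition mkLin (U V : lmodType S) (f : U -> V)
  (Hf : forall a x y, f (a *: x + y) = a *: f x + f y) : {linear U -> V} :=
  HB.pack f (GRing.isLinear.Build S U V *:%R f Hf).

Definition smclosed (V : lmodType S) (P : V -> Prop) :=
  P 0 /\ forall a x y, P x -> P y -> P (a *: x + y).

Section SubMod.
Variables (V : lmodType S) (P : V -> Prop) (HP : smclosed P).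

Record subm_ (H : smclosed P) := SubM { smv : V; smp : P smv }.
Definition subm := subm_ HP.
Definition mksub (x : V) (px : P x) : subm := SubM HP px.

HB.instance Definition _ := gen_eqMixin subm.
HB.instance Definition _ := gen_choiceMixin subm.

Lemma subm_eq (u v : subm) : smv u = smv v -> u = v.
Proof.
case: u v => [x xP] [y yP] /= exy; subst y; congr SubM; exact: Prop_irrelevance.
Qed.

Lemma HPadd x y : P x -> P y -> P (x + y).
Proof. by move=> hx hy; have := HP.2 1 x y hx hy; rewrite scale1r. Qed.
Lemma HPopp x : P x -> P (- x).
Proof. by move=> hx; have := HP.2 (-1) x 0 hx HP.1; rewrite addr0 scaleN1r. Qed.
Lemma HPscale a x : P x -> P (a *: x).
Proof. by move=> hx; have := HP.2 a x 0 hx HP.1; rewrite addr0. Qed.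

Definition sm_zero : subm := SubM HP HP.1.
Definition sm_add (u v : subm) : subm := SubM HP (HPadd (smp u) (smp v)).
Definition sm_opp (u : subm) : subm := SubM HP (HPopp (smp u)).
Definition sm_scale a (u : subm) : subm := SubM HP (HPscale a (smp u)).

Lemma sm_addA : associative sm_add.
Proof. by move=> u v w; apply: subm_eq => /=; rewrite addrA. Qed.
Lemma sm_addC : commutative sm_add.
Proof. by move=> u v; apply: subm_eq => /=; rewrite addrC. Qed.
Lemma sm_add0 : left_id sm_zero sm_add.
Proof. by move=> u; apply: subm_eq => /=; rewrite add0r. Qed.
Lemma sm_addN : left_inverse sm_zero sm_opp sm_add.
Proof. by move=> u; apply: subm_eq => /=; rewrite addNr. Qed.

HB.instance Definition _ := GRing.isZmodule.Build subm sm_addA sm_addC sm_add0 sm_addN.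

Lemma sm_scaleA a b v : sm_scale a (sm_scale b v) = sm_scale (a * b) v.
Proof. by apply: subm_eq => /=; rewrite scalerA. Qed.
Lemma sm_scale1 : left_id 1 sm_scale.
Proof. by move=> v; apply: subm_eq => /=; rewrite scale1r. Qed.
Lemma sm_scaleDr : right_distributive sm_scale +%R.
Proof. by move=> a u v; apply: subm_eq => /=; rewrite scalerDr. Qed.
Lemma sm_scaleDl v : {morph sm_scale^~ v : a b / a + b}.
Proof. by move=> a b; apply: subm_eq => /=; rewrite scalerDl. Qed.

HB.instance Definition _ := GRing.Zmodule_isLmodule.Build S subm
  sm_scaleA sm_scale1 sm_scaleDr sm_scaleDl.

Definition smvL : {linear subm -> V} := @mkLin subm V (fun u : subm => smv u) (fun a x y => erefl).

Lemma smv_inj : injective (fun u : subm => smv u).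
Proof. by move=> u v; apply: subm_eq. Qed.

End SubMod.

Section QuotMod.
Variables (V : lmodType S) (P : V -> Prop) (HP : smclosed P).

Definition cls (v : V) : V -> Prop := fun w => P (w - v).

Record quot_ (H : smclosed P) := Quot { qpred : V -> Prop; qprop : exists v, qpred = cls v }.
Definition quot := quot_ HP.

HB.instance Definition _ := gen_eqMixin quot.
HB.instance Definition _ := gen_choiceMixin quot.

Lemma quot_eq (u v : quot) : qpred u = qpred v -> u = v.
Proof.
case: u v => [x xP] [y yP] /= exy; subst y; congr Quot; exact: Prop_irrelevance.
Qed.

Definition qpi (v : V) : quot := @Quot HP (cls v) (ex_intro _ v erefl).
Definition qrep (q : quot) : V := projT1 (cid (qprop q)).

Lemma qpiK q : qpi (qrep q) = q.
Proof.
apply: quot_eq => /=; rewrite /qrep; case: (cid _) => v /= ->; done.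
Qed.

Lemma qpi_eq v w : (qpi v = qpi w) <-> P (v - w).
Proof.
split.
  move=> e; have : qpred (qpi v) v by rewrite /= /cls subrr; exact: HP.1.
  by rewrite e /=.
move=> hvw; apply: quot_eq => /=; apply: funext => x; apply: propext; rewrite /cls.
split=> h.
  by have := HPadd HP h hvw; rewrite addrA subrK.
have := HPadd HP h (HPopp HP hvw); by rewrite opprB addrA subrK.
Qed.

Lemma qpi_eq0 v : (qpi v = qpi 0) <-> P v.
Proof. by rewrite qpi_eq subr0. Qed.

Definition q_zero := qpi 0.
Definition q_add u v := qpi (qrep u + qrep v).
Definition q_opp u := qpi (- qrep u).
Definition q_scale a u := qpi (a *: qrep u).

Lemma q_addE v w : q_add (qpi v) (qpi w) = qpi (v + w).
Proof.
apply/qpi_eq; have /qpi_eq h1 := qpiK (qpi v); have /qpi_eq h2 := qpiK (qpi w).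
have := HPadd HP h1 h2; congr P.
by rewrite opprD addrACA.
Qed.
Lemma q_oppE v : q_opp (qpi v) = qpi (- v).
Proof.
apply/qpi_eq; have /qpi_eq h1 := qpiK (qpi v).
by have := HPopp HP h1; congr P; rewrite opprB opprK addrC.
Qed.
Lemma q_scaleE a v : q_scale a (qpi v) = qpi (a *: v).
Proof.
apply/qpi_eq; have /qpi_eq h1 := qpiK (qpi v).
by have := HPscale HP a h1; congr P; rewrite scalerBr.
Qed.

Lemma qind (Q : quot -> Prop) : (forall v, Q (qpi v)) -> forall q, Q q.
Proof. by move=> h q; rewrite -(qpiK q). Qed.

Lemma q_addA : associative q_add.
Proof.
by elim/qind=> u; elim/qind=> v; elim/qind=> w; rewrite !q_addE addrA.
Qed.
Lemma q_addC : commutative q_add.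
Proof. by elim/qind=> u; elim/qind=> v; rewrite !q_addE addrC. Qed.
Lemma q_add0 : left_id q_zero q_add.
Proof. by elim/qind=> u; rewrite /q_zero q_addE add0r. Qed.
Lemma q_addN : left_inverse q_zero q_opp q_add.
Proof. by elim/qind=> u; rewrite q_oppE q_addE addNr. Qed.

HB.instance Definition _ := GRing.isZmodule.Build quot q_addA q_addC q_add0 q_addN.

Lemma qpiD v w : (qpi v + qpi w : quot) = qpi (v + w).
Proof. exact: q_addE. Qed.

Lemma q_scaleA a b v : q_scale a (q_scale b v) = q_scale (a * b) v.
Proof. by elim/qind: v => v; rewrite !q_scaleE scalerA. Qed.
Lemma q_scale1 : left_id 1 q_scale.
Proof. by elim/qind=> v; rewrite q_scaleE scale1r. Qed.
Lemma q_scaleDr : right_distributive q_scale +%R.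
Proof.
by move=> a; elim/qind=> u; elim/qind=> v; rewrite qpiD !q_scaleE qpiD scalerDr.
Qed.
Lemma q_scaleDl v : {morph q_scale^~ v : a b / a + b}.
Proof.
by elim/qind: v => v a b; rewrite !q_scaleE qpiD scalerDl.
Qed.

HB.instance Definition _ := GRing.Zmodule_isLmodule.Build S quot
  q_scaleA q_scale1 q_scaleDr q_scaleDl.

Lemma qpi_lin a x y : qpi (a *: x + y) = a *: qpi x + qpi y.
Proof. by rewrite -qpiD; congr (_ + _); rewrite -q_scaleE. Qed.

Definition qpiL : {linear V -> quot} := mkLin qpi_lin.

Lemma qpiL0 v : (qpiL v = 0) <-> P v.
Proof. exact: qpi_eq0. Qed.

Lemma qpiL_surj q : exists v, qpiL v = q.
Proof. by exists (qrep q); exact: qpiK. Qed.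

End QuotMod.
End Gen.


Section Gen2.
Variable S : pzRingType.
Implicit Types (U V X Y Z T A B W : lmodType S).

Lemma lin_inv U V (f : {linear U -> V}) :
  bijective f -> exists u : {linear V -> U}, cancel f u /\ cancel u f.
Proof.
case=> g fg gf.
have Hg : forall a x y, g (a *: x + y) = a *: g x + g y.
  by move=> a x y; apply: (can_inj fg); rewrite linearP !gf.
by exists (mkLin Hg).
Qed.

Lemma factor_surj X Y T (p : {linear X -> Y}) (F : {linear X -> T}) :
  (forall y, exists x, p x = y) -> (forall x, p x = 0 -> F x = 0) ->
  exists s : {linear Y -> T}, forall x, s (p x) = F x.
Proof.
move=> hs hk.
pose pre y := projT1 (cid (hs y)).
have preP y : p (pre y) = y by rewrite /pre; case: (cid _).
have eqF x x' : p x = p x' -> F x = F x'.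
  by move=> e; apply/eqP; rewrite -subr_eq0 -linearB hk // linearB e subrr.
have Hs : forall a y y', F (pre (a *: y + y')) = a *: F (pre y) + F (pre y').
  by move=> a y y'; rewrite -linearP; apply: eqF; rewrite linearP !preP.
exists (mkLin Hs) => x /=; apply: eqF; exact: preP.
Qed.

Lemma inv_on_image B Z W (i : {linear B -> W}) (G : {linear Z -> W}) :
  injective i -> (forall z, exists b, G z = i b) ->
  exists r : {linear Z -> B}, forall z, i (r z) = G z.
Proof.
move=> ii hG.
pose r z := projT1 (cid (hG z)).
have rP z : G z = i (r z) by rewrite /r; case: (cid _).
have Hr : forall a z z', r (a *: z + z') = a *: r z + r z'.
  by move=> a z z'; apply: ii; rewrite linearP -!rP linearP.
by exists (mkLin Hr) => z /=; rewrite -rP.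
Qed.

Definition exact3 B X A (i : {linear B -> X}) (p : {linear X -> A}) :=
  [/\ injective i, (forall a, exists x, p x = a) &
      (forall x, p x = 0 <-> exists b, x = i b)].

Lemma split_retr B Z Y (i : {linear B -> Z}) (p : {linear Z -> Y})
  (r : {linear Z -> B}) :
  exact3 i p -> (forall b, r (i b) = b) ->
  exists s : {linear Y -> Z}, forall y, p (s y) = y.
Proof.
case=> ii ps pk ri.
have HF : forall a x y, (a *: x + y) - i (r (a *: x + y)) =
   a *: (x - i (r x)) + (y - i (r y)).
  by move=> a x y; rewrite (linearP r) (linearP i) opprD addrACA scalerBr.
have hk : forall z, p z = 0 -> mkLin HF z = 0.
  move=> z /pk [b ->] /=; by rewrite ri subrr.
have [s sP] := @factor_surj Z Y Z p (mkLin HF) ps hk.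
exists s => y; have [z <-] := ps y; rewrite sP /= linearB.
have -> : p (i (r z)) = 0 by apply/pk; exists (r z).
by rewrite subr0.
Qed.

Lemma lin_inj0 U V (f : {linear U -> V}) : injective f -> forall x, f x = 0 -> x = 0.
Proof. by move=> fi x fx; apply: fi; rewrite fx linear0. Qed.

Section Cot.
Variables (CA CB : lmodType S -> Prop) (Hcot : cotorsion_pair CA CB).

Lemma ext_split A B Z (i : {linear B -> Z}) (p : {linear Z -> A}) :
  CA A -> CB B -> exact3 i p -> exists s : {linear A -> Z}, forall a, p (s a) = a.
Proof.
move=> hA hB [ii ps pk]; have := (proj1 (proj1 Hcot A) hA B hB Z i p ii ps pk).
done.
Qed.

Lemma pullback_lift A B Z Y (i : {linear B -> Z}) (p : {linear Z -> Y})
  (j : {linear A -> Y}) : CA A -> CB B -> exact3 i p ->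
  exists s : {linear A -> Z}, forall a, p (s a) = j a.
Proof.
move=> hA hB [ii ps pk].
pose P := fun za : (Z * A)%type => p za.1 = j za.2.
have HP : smclosed P.
  split; first by rewrite /P /= !linear0.
  by move=> a [z x] [z' x']; rewrite /P /= => e e'; rewrite !linearP e e'.
pose Zp := subm HP.
have HiA : forall b, P (i b, 0).
  move=> b; rewrite /P /= linear0; apply/pk; by exists b.
have Hi : forall a b b', mksub HP (HiA (a *: b + b')) = a *: mksub HP (HiA b) + mksub HP (HiA b').
  move=> a b b'; apply: subm_eq => /=; rewrite linearP.
  by apply: injective_projections => /=; rewrite ?scaler0 ?addr0.
have Hp : forall a (x y : Zp), (smv (a *: x + y)).2 = a *: (smv x).2 + (smv y).2.
  by [].
have ex3 : exact3 (mkLin Hi) (mkLin Hp).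
  split.
  - move=> b b' /= /(congr1 (@smv _ _ _ HP)) /= [] /ii; done.
  - move=> a /=; have [z zP] := ps (j a).
    by exists (mksub HP (x := (z, a)) zP).
  - move=> u; split.
      move=> /= x0; have := smp u; rewrite /P x0 linear0 => /pk [b eb].
      by exists b; apply: subm_eq; rewrite /= -eb -x0 -surjective_pairing.
    by case=> b -> /=.
have [s sP] := @ext_split A B Zp (mkLin Hi) (mkLin Hp) hA hB ex3.
have Hs : forall a x y, (smv (s (a *: x + y))).1 = a *: (smv (s x)).1 + (smv (s y)).1.
  by move=> a x y; rewrite linearP.
exists (mkLin Hs) => a /=; have := smp (s a); rewrite /P => ->.
by have := sP a; move=> /= ->.
Qed.

End Cot.

End Gen2.


Section Gen3.
Variable S : pzRingType.
Implicit Types (U V X Y Z T A B W : lmodType S).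

Definition evL (U : lmodType S) (k : nat) : {linear U^(omega) -> U} :=
  @mkLin _ (U^(omega)) U (fun w => w k) (fun a x y => erefl).

Arguments evL {U} k.
Lemma evLE U k (w : U^(omega)) : evL k w = w k. Proof. by []. Qed.

Lemma dsum_addE U (x y : U^(omega)) k : (x + y) k = x k + y k. Proof. by []. Qed.
Lemma dsum_scaleE U a (x : U^(omega)) k : (a *: x) k = a *: x k. Proof. by []. Qed.
Lemma dsum_zeroE U k : (0 : U^(omega)) k = 0. Proof. by []. Qed.
Lemma dsum_oppE U (x : U^(omega)) k : (- x) k = - x k. Proof. by []. Qed.
Lemma dsum_subE U (x y : U^(omega)) k : (x - y) k = x k - y k. Proof. by []. Qed.

Lemma ins_fin U (n : nat) (u : U) : fin_supp (fun k => if k == n then u else 0).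
Proof. by exists n.+1 => k hk; case: eqP => // e; move: hk; rewrite e ltnn. Qed.

Definition ins_fun U (n : nat) (u : U) : U^(omega) := DSumOmega (ins_fin n u).

Lemma ins_lin U n a (x y : U) : ins_fun n (a *: x + y) = a *: ins_fun n x + ins_fun n y.
Proof.
apply: dsum_eq => k /=; case: eqP => _ //; by rewrite scaler0 addr0.
Qed.

Definition insL U n : {linear U -> U^(omega)} := mkLin (@ins_lin U n).

Arguments insL {U} n.
Lemma insE U n (u : U) k : insL n u k = if k == n then u else 0.
Proof. by []. Qed.

Lemma insL_inj U n : injective (@insL U n).
Proof. by move=> x y /(congr1 (fun w : U^(omega) => w n)); rewrite !insE eqxx. Qed.

Lemma dmap_fin U V (f : {linear U -> V}) (w : U^(omega)) : fin_supp (fun k => f (w k)).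
Proof. by case: (dsum_finP w) => N HN; exists N => k hk; rewrite HN // linear0. Qed.

Definition dmap_fun U V (f : {linear U -> V}) (w : U^(omega)) : V^(omega) :=
  DSumOmega (dmap_fin f w).

Lemma dmap_lin U V (f : {linear U -> V}) a x y :
  dmap_fun f (a *: x + y) = a *: dmap_fun f x + dmap_fun f y.
Proof. by apply: dsum_eq => k /=; rewrite linearP. Qed.

Definition dmap U V (f : {linear U -> V}) : {linear U^(omega) -> V^(omega)} :=
  mkLin (dmap_lin f).

Lemma dmapE U V (f : {linear U -> V}) w k : dmap f w k = f (w k). Proof. by []. Qed.

Definition bounded U (w : U^(omega)) N := forall n, (N <= n)%N -> w n = 0.

Lemma bounded_le U (w : U^(omega)) N N' : bounded w N -> (N <= N')%N -> bounded w N'.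
Proof. by move=> h le n hn; apply: h; apply: leq_trans hn. Qed.

Lemma sum_bound U T (F : nat -> {linear U -> T}) (w : U^(omega)) N N' :
  bounded w N -> (N <= N')%N ->
  \sum_(0 <= n < N') F n (w n) = \sum_(0 <= n < N) F n (w n).
Proof.
move=> hb le; rewrite (big_cat_nat (n := N)) /=; last exact: le; last exact: leq0n.
rewrite [X in _ + X]big1_seq ?addr0 // => n /andP [_]; rewrite mem_index_iota.
by case/andP=> hn _; rewrite hb // linear0.
Qed.

Lemma sum_bound2 U T (F : nat -> {linear U -> T}) (w : U^(omega)) N N' :
  bounded w N -> bounded w N' ->
  \sum_(0 <= n < N') F n (w n) = \sum_(0 <= n < N) F n (w n).
Proof.
move=> h h'; rewrite -(@sum_bound _ _ F w N (maxn N N')) ?leq_maxl //.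
by rewrite (@sum_bound _ _ F w N' (maxn N N')) ?leq_maxr.
Qed.

Lemma bnd_ex U (w : U^(omega)) : exists N, bounded w N.
Proof. by case: (dsum_finP w) => N HN; exists N. Qed.

Lemma dsum_sum U T (F : nat -> {linear U -> T}) :
  exists Sg : {linear U^(omega) -> T}, forall w N, bounded w N ->
    Sg w = \sum_(0 <= n < N) F n (w n).
Proof.
pose bnd (w : U^(omega)) := projT1 (cid (bnd_ex w)).
have bndP w : bounded w (bnd w) by rewrite /bnd; case: (cid _).
pose Sg w := \sum_(0 <= n < bnd w) F n (w n).
have HS : forall a x y, Sg (a *: x + y) = a *: Sg x + Sg y.
  move=> a x y; pose N := maxn (bnd (a *: x + y)) (maxn (bnd x) (bnd y)).
  have bx : bounded x N.
    by apply: (bounded_le (bndP x)); rewrite /N (leq_trans (leq_maxl _ (bnd y))) ?leq_maxr.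
  have by_ : bounded y N.
    by apply: (bounded_le (bndP y)); rewrite /N (leq_trans (leq_maxr (bnd x) _)) ?leq_maxr.
  have bxy : bounded (a *: x + y) N by apply: (bounded_le (bndP _)); rewrite leq_maxl.
  rewrite /Sg (sum_bound2 F bxy (bndP _)) (sum_bound2 F bx (bndP _)).
  rewrite (sum_bound2 F by_ (bndP _)) scaler_sumr -big_split /=.
  by apply: eq_bigr => n _; rewrite linearP.
exists (mkLin HS) => w N hN /=; rewrite /Sg; exact: sum_bound2.
Qed.

Lemma dsum_decomp U (w : U^(omega)) N : bounded w N ->
  w = \sum_(0 <= n < N) insL n (w n).
Proof.
move=> hb; apply: dsum_eq => k.
rewrite -[X in _ = X]evLE linear_sum /=.
have -> : forall M, \sum_(0 <= i < M) evL k (insL i (w i)) = if (k < M)%N then w k else 0.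
  elim=> [|M IH]; first by rewrite big_geq.
  rewrite big_nat_recr //= IH.
  case: (ltngtP k M) => [h|h|->].
  - by rewrite ltnS (ltnW h) addr0.
  - by rewrite ltnS leqNgt h addr0.
  - by rewrite ltnSn add0r.
case: ltnP => // hk; by rewrite hb.
Qed.

End Gen3.
Arguments insL {S U} n.
Arguments evL {S U} k.


Section Gen4.
Variable S : pzRingType.
Implicit Types (U V X Y Z T A B W M C K : lmodType S).

Definition fstL U V : {linear (U * V)%type -> U} :=
  @mkLin _ (U * V)%type U fst (fun a x y => erefl).
Definition sndL U V : {linear (U * V)%type -> V} :=
  @mkLin _ (U * V)%type V snd (fun a x y => erefl).
Lemma inl_lin U V a (x y : U) : ((a *: x + y, 0) : (U * V)%type) = a *: (x, 0) + (y, 0).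
Proof. by apply: injective_projections => /=; rewrite ?scaler0 ?addr0. Qed.
Lemma inr_lin U V a (x y : V) : ((0, a *: x + y) : (U * V)%type) = a *: (0, x) + (0, y).
Proof. by apply: injective_projections => /=; rewrite ?scaler0 ?addr0. Qed.
Definition inlL U V : {linear U -> (U * V)%type} := mkLin (@inl_lin U V).
Definition inrL U V : {linear V -> (U * V)%type} := mkLin (@inr_lin U V).

Lemma inj_from0 U V (f : {linear U -> V}) : (forall x, f x = 0 -> x = 0) -> injective f.
Proof. by move=> h x y e; apply/eqP; rewrite -subr_eq0; apply/eqP/h; rewrite linearB e subrr. Qed.

Lemma kerc U V (f : {linear U -> V}) : smclosed (fun x : U => f x = 0).
Proof. by split; [rewrite linear0 | move=> a x y hx hy; rewrite linearP hx hy scaler0 addr0]. Qed.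

Lemma imc U V (f : {linear U -> V}) : smclosed (fun y : V => exists x, y = f x).
Proof.
split; first by exists 0; rewrite linear0.
by move=> a _ _ [x ->] [y ->]; exists (a *: x + y); rewrite linearP.
Qed.

Section Cot.
Variables (CA CB : lmodType S -> Prop) (Hcot : cotorsion_pair CA CB).

Lemma reg_CA : CA (S^o).
Proof.
apply/(proj1 Hcot) => B hB X i p ii ps pk.
have [x0 hx0] := ps (1 : S^o).
have Hs : forall (a : S) (r r' : S^o), ((a *: r + r' : S^o) : S) *: x0 = a *: ((r : S) *: x0) + (r' : S) *: x0.
  by move=> a r r'; rewrite scalerDl scalerA.
exists (@mkLin _ (S^o) X (fun r : S^o => (r : S) *: x0) Hs) => r /=.
by rewrite linearZ hx0 /= [X in X = _]/(GRing.scale _ _) /= mulr1.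
Qed.

Lemma precover_surj A M (h : {linear A -> M}) : is_precover CA h ->
  forall m, exists a, h a = m.
Proof.
case=> hA hlift m.
have Hf : forall (a : S) (r r' : S^o), ((a *: r + r' : S^o) : S) *: m = a *: ((r : S) *: m) + (r' : S) *: m.
  by move=> a r r'; rewrite scalerDl scalerA.
have [g gP] := hlift _ (@mkLin _ (S^o) M (fun r : S^o => (r : S) *: m) Hf) reg_CA.
by exists (g 1); rewrite gP /= scale1r.
Qed.

Lemma ext_closed A A' Y (j : {linear A -> Y}) (q : {linear Y -> A'}) :
  CA A -> CA A' -> exact3 j q -> CA Y.
Proof.
move=> hA hA' [ji qs qk].
apply/(proj1 Hcot) => B hB Z i p ii ps pk.
have ex : exact3 i p by split.
have [s1 s1P] := pullback_lift Hcot j hA hB ex.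
pose P := fun z : Z => exists a, z = s1 a.
have HP : smclosed P by apply: imc.
pose W := quot HP.
have k1 : forall z, qpiL HP z = 0 -> (q \o p) z = 0.
  by move=> z /qpiL0 [a ->] /=; rewrite s1P; apply/qk; exists a.
have [pW pWP] := factor_surj ((@qpiL_surj _ _ _ HP)) k1.
pose iW := (qpiL HP \o i : {linear B -> W}).
have exW : exact3 iW pW.
  split.
  - apply: inj_from0 => b /= /qpiL0 [a e].
    have : j a = 0 by rewrite -s1P -e; apply/pk; exists b.
    move/(lin_inj0 ji) => a0; move: e; rewrite a0 linear0 => /(lin_inj0 ii); done.
  - move=> a'; have [y <-] := qs a'; have [z <-] := ps y.
    by exists (qpiL HP z); rewrite pWP.
  - move=> w; have [z <-] := (@qpiL_surj _ _ _ HP) w; rewrite pWP /=; split.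
      move/qk => [a ea]; have : p (z - s1 a) = 0 by rewrite linearB ea s1P subrr.
      move/pk => [b eb]; exists b.
      by apply/qpi_eq; exists a; rewrite -eb opprB addrC subrK.
    case=> b /= /qpi_eq [a ea].
    have : p (z - i b) = j a by rewrite ea s1P.
    have pib : p (i b) = 0 by apply/pk; exists b.
    by rewrite linearB pib subr0 => ->; apply/qk; exists a.
have [tau tauP] := ext_split Hcot hA' hB exW.
have HG : forall a x y, (qpiL HP (a *: x + y) - tau (pW (qpiL HP (a *: x + y)))) =
   a *: (qpiL HP x - tau (pW (qpiL HP x))) + (qpiL HP y - tau (pW (qpiL HP y))).
  by move=> a x y; rewrite (linearP (qpiL HP)) (linearP pW) (linearP tau) opprD addrACA scalerBr.
pose G := mkLin HG.
have Gim : forall z, exists b, G z = iW b.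
  move=> z; case: exW => _ _ kW; apply/kW.
  by rewrite /= linearB tauP subrr.
have iWi : injective iW by case: exW.
have [r rP] := inv_on_image iWi Gim.
have ri : forall b, r (i b) = b.
  move=> b; apply: iWi; rewrite rP /=.
  have pib : p (i b) = 0 by apply/pk; exists b.
  by have := pWP (i b); rewrite /= pib linear0 => ->; rewrite linear0 subr0.
have [s sP] := split_retr ex ri.
by exists s.
Qed.
Lemma wakamatsu A M (h : {linear A -> M}) : is_cover CA h -> CB (subm (kerc h)).
Proof.
move=> [[hA hlift] hcov].
set K := subm (kerc h).
apply/(proj2 Hcot) => A' hA' X i p ii ps pk.
pose U := fun ax : (A * X)%type => exists k : K, ax = (smv k, - i k).
have HU : smclosed U.
  split; first by exists 0; rewrite linear0 oppr0.
  move=> a _ _ [k ->] [k' ->]; exists (a *: k + k').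
  by apply: injective_projections => //=; rewrite linearP opprD scalerN.
pose Y := quot HU.
pose j := (qpiL HU \o inlL A X : {linear A -> Y}).
pose j2 := (qpiL HU \o inrL A X : {linear X -> Y}).
have k1 : forall ax, qpiL HU ax = 0 -> (p \o sndL A X) ax = 0.
  move=> ax /qpiL0 [k ->] /=; rewrite linearN; apply/eqP; rewrite oppr_eq0; apply/eqP.
  by apply/pk; exists k.
have [q qP] := factor_surj (@qpiL_surj _ _ _ HU) k1.
have k2 : forall ax, qpiL HU ax = 0 -> (h \o fstL A X) ax = 0.
  by move=> ax /qpiL0 [k ->] /=; exact: (smp k).
have [h' h'P] := factor_surj (@qpiL_surj _ _ _ HU) k2.
have ex : exact3 j q.
  split.
  - apply: inj_from0 => a /= /qpiL0 [k [ea /esym]].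
    move/eqP; rewrite oppr_eq0 => /eqP /(lin_inj0 ii) k0; by rewrite ea k0.
  - move=> a'; have [x <-] := ps a'; exists (j2 x).
    by have := qP (0, x).
  - move=> y; have [[a x] <-] := (@qpiL_surj _ _ _ HU) y.
    rewrite qP /=; split.
      move/pk => [k ->]; exists (a + smv k); apply/qpi_eq; exists (- k).
      apply: injective_projections => /=; rewrite ?linearN ?opprK //.
      by rewrite opprD addrA subrr sub0r.
      by rewrite subr0.
    case=> a0 /qpi_eq [k ek].
    move: (congr1 snd ek) => /=.
    by rewrite subr0 => ->; rewrite linearN; apply/eqP; rewrite oppr_eq0; apply/eqP/pk; exists k.
have hY : CA Y by apply: (ext_closed hA hA' ex).
have [t tP] := hlift _ h' hY.
have he : forall a, h ((t \o j) a) = h a.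
  by move=> a /=; rewrite tP; have := h'P (a, 0).
have [u [eu ue]] := lin_inv (hcov _ he).
have hu : forall z, h (u z) = h z by move=> z; rewrite -{2}(ue z) he.
have hr : forall x, h (u (t (j2 x))) = 0.
  by move=> x; rewrite hu tP; have := h'P (0, x); rewrite /= => ->; rewrite linear0.
have Hr : forall a x y, mksub (kerc h) (hr (a *: x + y)) =
   a *: mksub (kerc h) (hr x) + mksub (kerc h) (hr y).
  by move=> a x y; apply: subm_eq => /=; exact: (linearP (u \o t \o j2) a x y).
pose r := mkLin Hr.
have ri : forall k, r (i k) = k.
  move=> k; apply: subm_eq => /=.
  have -> : qpi HU (0, i k) = j (smv k).
    apply/qpi_eq; exists (- k); apply: injective_projections => /=.
      by rewrite sub0r.
    by rewrite subr0 linearN opprK.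
  by have := eu (smv k).
have [s sP] := split_retr (And3 ii ps pk) ri.
by exists s.
Qed.

End Cot.
End Gen4.


Section Gen5.
Variable S : pzRingType.
Implicit Types (U V X Y Z T A B W M C K : lmodType S).

Section Cot.
Variables (CA CB : lmodType S -> Prop) (Hcot : cotorsion_pair CA CB).

Lemma sum_closed A : CA A -> CA (A^(omega)).
Proof.
move=> hA; apply/(proj1 Hcot) => B hB Z i p ii ps pk.
have ex : exact3 i p by split.
have [sg sgP] := choice (fun n => pullback_lift Hcot (insL n) hA hB ex).
have [Sg SgP] := dsum_sum sg.
exists Sg => w; have [N hN] := bnd_ex w.
rewrite (SgP w N hN) linear_sum [RHS](dsum_decomp hN).
by apply: eq_bigr => n _; rewrite sgP.
Qed.

Lemma endo_inj A M (h : {linear A -> M}) : is_cover CA h ->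
  forall rho : {linear A^(omega) -> A^(omega)},
  (forall w, dmap h (rho w) = dmap h w) -> injective rho.
Proof.
move=> [_ hcov].
have claim : forall N (rho : {linear A^(omega) -> A^(omega)}),
   (forall w, dmap h (rho w) = dmap h w) ->
   forall q, bounded q N -> (forall n, (n < N)%N -> rho q n = 0) -> q = 0.
  elim=> [|N IH] rho hrho q hq hz.
    by apply: dsum_eq => n; rewrite hq.
  have hrhok : forall w k, h (rho w k) = h (w k).
    by move=> w k; have := congr1 (fun v : M^(omega) => v k) (hrho w).
  pose b := q N.
  pose q' := q - insL N b.
  have bq' : bounded q' N.
    move=> n; rewrite leq_eqVlt => /orP [/eqP <-|hn].
      by rewrite /q' dsum_subE insE eqxx subrr.
    by rewrite /q' dsum_subE insE (gtn_eqF hn) subr0 hq.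
  pose f := (evL N \o rho \o insL N : {linear A -> A}).
  have hf : forall a, h (f a) = h a by move=> a /=; rewrite hrhok insE eqxx.
  have [u [fu uf]] := lin_inv (hcov _ hf).
  have hu : forall z, h (u z) = h z by move=> z; rewrite -{2}(uf z) hf.
  have Hg1 : forall a (x y : A^(omega)),
     (a *: x + y) + insL N (u ((a *: x + y) N - rho (a *: x + y) N)) =
     a *: (x + insL N (u (x N - rho x N))) + (y + insL N (u (y N - rho y N))).
    move=> a x y; rewrite dsum_addE dsum_scaleE (linearP rho) dsum_addE dsum_scaleE.
    rewrite opprD addrACA -scalerBr (linearP u) (linearP (insL N)).
    by rewrite scalerDr addrACA.
  pose g1 := mkLin Hg1.
  pose rho' := (rho \o g1 : {linear A^(omega) -> A^(omega)}).
  have hrho' : forall w, dmap h (rho' w) = dmap h w.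
    move=> w; apply: dsum_eq => k; rewrite !dmapE /= hrhok dsum_addE insE linearD.
    case: eqP => [->|_]; last by rewrite linear0 addr0.
    by rewrite hu linearB hrhok subrr addr0.
  have ebq : b = u (- rho q' N).
    have : rho q N = 0 by apply: hz.
    have -> : q = q' + insL N b by rewrite /q' subrK.
    rewrite linearD dsum_addE => /eqP; rewrite addr_eq0 => /eqP e.
    by rewrite e opprK; exact: (esym (fu b)).
  have eg : g1 q' = q.
    change (q' + insL N (u (q' N - rho q' N)) = q).
    by rewrite (bq' N (leqnn N)) sub0r -ebq /q' subrK.
  have q'0 : q' = 0.
    apply: (IH rho' hrho' q' bq') => n hn; change (rho (g1 q') n = 0); rewrite eg; apply: hz.
    exact: ltnW hn.
  have : b = 0 by rewrite ebq q'0 linear0 dsum_zeroE oppr0 linear0.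
  by move=> b0; rewrite -(subrK (insL N b) q) -/q' q'0 b0 linear0 addr0.
move=> rho hrho; apply: inj_from0 => q hq.
have [N hN] := bnd_ex q.
by apply: (claim N rho hrho q hN) => n _; rewrite hq.
Qed.

End Cot.
End Gen5.


Section Gen6.
Variable S : pzRingType.
Implicit Types (U V X Y Z T A B W M C K : lmodType S).

Section Cot.
Variables (CA CB : lmodType S -> Prop) (Hcot : cotorsion_pair CA CB).

Lemma dmap_exact A M (h : {linear A -> M}) : (forall m, exists a, h a = m) ->
  exact3 (dmap (smvL (kerc h))) (dmap h).
Proof.
move=> hs; split.
- apply: inj_from0 => k hk; apply: dsum_eq => n; apply: subm_eq.
  by have := congr1 (fun v : A^(omega) => v n) hk.
- move=> m.
  pose pre (x : M) := if x == 0 then 0 else projT1 (cid (hs x)).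
  have preP x : h (pre x) = x.
    rewrite /pre; case: eqP => [->|_]; first by rewrite linear0.
    by case: (cid _).
  have fs : fin_supp (fun n => pre (m n)).
    have [N hN] := bnd_ex m; exists N => n hn; by rewrite /pre hN ?eqxx.
  by exists (DSumOmega fs); apply: dsum_eq => n /=; rewrite preP.
- move=> w; split.
    move=> hw.
    have hwn : forall n, h (w n) = 0.
      by move=> n; have := congr1 (fun v : M^(omega) => v n) hw.
    pose kk n : subm (kerc h) := mksub (kerc h) (hwn n).
    have fs : fin_supp kk.
      have [N hN] := bnd_ex w; exists N => n hn; apply: subm_eq => /=; exact: hN.
    by exists (DSumOmega fs); apply: dsum_eq.
  case=> k ->; apply: dsum_eq => n /=; exact: (smp (k n)).
Qed.

Lemma reverse A M (h : {linear A -> M}) : is_cover CA h ->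
  (forall B, CB B -> CB (B^(omega))) -> kernel_locally_split h ->
  has_cover CA (M^(omega)) -> bijective h.
Proof.
move=> hcov Hsum hls [C [c [[hC clift] ccov]]].
have hA := hcov.1.1.
have hsurj := precover_surj Hcot hcov.1.
have hK := wakamatsu Hcot hcov.
have hKw := Hsum _ hK.
have ex := dmap_exact hsurj.
have [Psi PsiP] := pullback_lift Hcot c hC hKw ex.
have [al alP] := choice (fun n => clift A (insL n \o h) hA).
have [Phi PhiP] := dsum_sum al.
have cPhi : forall w, c (Phi w) = dmap h w.
  move=> w; have [N hN] := bnd_ex w.
  have hN' : bounded (dmap h w) N by move=> n hn; rewrite dmapE hN // linear0.
  rewrite (PhiP w N hN) linear_sum [RHS](dsum_decomp hN').
  by apply: eq_bigr => n _; rewrite alP.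
have hg : forall y, c ((Phi \o Psi) y) = c y by move=> y; rewrite /= cPhi; exact: PsiP.
have [g' [gg' g'g]] := lin_inv (ccov _ hg).
have pinj : injective (Psi \o Phi).
  apply: (endo_inj hcov) => w; rewrite -(cPhi w); exact: PsiP.
have Psis : forall w, exists y, Psi y = w.
  move=> w; exists (g' (Phi w)); apply: pinj => /=.
  by have := g'g (Phi w); rewrite /= => ->.
have Phii : injective Phi.
  move=> w1 w2; have [y1 <-] := Psis w1; have [y2 <-] := Psis w2.
  by move=> /(can_inj gg') ->.
have ker0 : forall x, h x = 0 -> x = 0.
  move=> x hx; have [g [hg0 gx]] := hls x hx.
  have shf : forall w : A^(omega), fin_supp (fun n => if n is n'.+1 then g (w n') else 0).
    move=> w; have [N hN] := bnd_ex w; exists N.+1 => [[|n]] // hn.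
    by rewrite hN // linear0.
  have Hth : forall a (x1 y : A^(omega)),
     (a *: x1 + y) - DSumOmega (shf (a *: x1 + y)) =
     a *: (x1 - DSumOmega (shf x1)) + (y - DSumOmega (shf y)).
    move=> a x1 y; apply: dsum_eq => [[|n]] /=.
      by rewrite !subr0.
    by rewrite (linearP g) opprD addrACA scalerBr.
  pose th := mkLin Hth.
  have hth : forall w, dmap h (th w) = dmap h w.
    move=> w; apply: dsum_eq => [[|n]] /=; rewrite linearB ?linear0 ?hg0 ?oppr0 ?addr0 ?subr0 //.
  have hchi : forall y, c ((Phi \o th \o Psi) y) = c y.
    by move=> y /=; rewrite cPhi hth PsiP.
  have [chi' [_ chi'c]] := lin_inv (ccov _ hchi).
  set w := Psi (chi' (Phi (insL 0 x))).
  have ew : th w = insL 0 x.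
    by apply: Phii; have := chi'c (Phi (insL 0 x)).
  have wx : forall n, w n = x.
    elim=> [|n IH].
      by have := congr1 (fun v : A^(omega) => v 0%N) ew; rewrite /th /= subr0.
    have := congr1 (fun v : A^(omega) => v n.+1) ew; rewrite /th /= IH gx.
    by move/eqP; rewrite subr_eq0 => /eqP.
  have [N hN] := bnd_ex w; by rewrite -(wx N) hN.
have hinj := inj_from0 ker0.
pose hinv m := projT1 (cid (hsurj m)).
have hinvP m : h (hinv m) = m by rewrite /hinv; case: (cid _).
by exists hinv => [a|m]; [apply: hinj; rewrite hinvP | exact: hinvP].
Qed.

Lemma forward A M (h : {linear A -> M}) : is_cover CA h -> bijective h ->
  kernel_locally_split h /\ has_cover CA (M^(omega)).
Proof.
move=> hcov hb; have hinj := bij_inj hb.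
split.
  move=> x hx; have x0 : x = 0 by apply: hinj; rewrite hx linear0.
  have Hz : forall a (u v : A), (0 : A) = a *: 0 + 0 by move=> *; rewrite scaler0 addr0.
  exists (mkLin Hz); split=> [y|] /=; [exact: linear0 | by rewrite x0].
have [hi [hhi hih]] := lin_inv hb.
exists (A^(omega)), (dmap h); split.
  split; first exact: (sum_closed Hcot hcov.1.1).
  move=> A' f _; exists (dmap hi \o f) => x; apply: dsum_eq => n /=; exact: hih.
move=> g hg.
have gid : forall x, g x = x.
  move=> x; apply: dsum_eq => n; apply: hinj.
  by have := congr1 (fun v : M^(omega) => v n) (hg x).
by exists g => x; rewrite !gid.
Qed.

End Cot.
End Gen6.

Local Close Scope ring_scope.

Theorem proposition5p1 (R : pzRingType)
  (CA CB : rmodType R -> Prop)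
  (Hcot : cotorsion_pair CA CB)
  (Hsum : forall B : rmodType R, CB B -> CB (B^(omega)))
  (A M : rmodType R) (h : {linear A -> M})
  (Hcov : is_cover CA h) :
  is_iso h <-> (kernel_locally_split h /\ has_cover CA (M^(omega))).
Proof.
split.
- move=> hb; exact: (forward Hcot Hcov hb).
- case=> hls hc; exact: (reverse Hcot Hcov Hsum hls hc).
Qed.
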